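(* Let $c \in (0,1/2]$, $t_1 \in [0,1-2c]$, $t_2 \in [t_1+c,1-c]$, and let $p,q \in (0,1)$ with $p \neq q$. Let $F$, $\Lambda_{p,q}$ and $\gamma_r$ be as described in the context. Then for every $r \in \Lambda_{p,q}$, \[ \left(\int_{F \times F} |x-y|^2 \, d\gamma_r(x,y)\right)^{1/2} \;=\; \frac{t_2-t_1}{1-c}\sqrt{\frac{2c(p-q)^2+(1-c)(p+q-2r)}{1+c}}. \]
   Context: Let $S_1(x)=cx+t_1$ and $S_2(x)=cx+t_2$ on $[0,1]$. Let $F\subseteq[0,1]$ be the unique nonempty compact set with $F=S_1(F)\cup S_2(F)$. For $p\in(0,1)$, $\mu_p$ is the unique Borel probability measure with $\mu_p = p\,\mu_p\circ S_1^{-1} + (1-p)\,\mu_p\circ S_2^{-1}$. On $[0,1]^2$ define $S_{i,j}(x,y)=(S_i(x),S_j(y))$ for $i,j\in\{1,2\}$. Let $\Lambda_{p,q}$ be the open interval $\max\{0,p+q-1\}<r<\min\{p,q\}$. For $r\in\Lambda_{p,q}$, $\gamma_r$ is the unique Borel probability measure on $[0,1]^2$ satisfying $\gamma_r = r\,\gamma_r\circ S_{1,1}^{-1} + (p-r)\,\gamma_r\circ S_{1,2}^{-1} + (q-r)\,\gamma_r\circ S_{2,1}^{-1} + (1-p-q+r)\,\gamma_r\circ S_{2,2}^{-1}$; it is supported on $F\times F$ and is a coupling of $\mu_p$ and $\mu_q$. *)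

(* Defs.v *)
From HB Require Import structures.
From mathcomp Require Import all_boot all_order all_algebra.
From mathcomp Require Import all_classical all_reals all_analysis.
Set Implicit Arguments. Unset Strict Implicit. Unset Printing Implicit Defensive.
Import Order.TTheory GRing.Theory Num.Theory.
Import numFieldNormedType.Exports.
Local Open Scope classical_set_scope.
Local Open Scope ring_scope.

Definition simil {R : realType} (c t : R) (x : R) : R := c * x + t.

Definition simil2 {R : realType} (c ti tj : R) (z : R * R) : R * R :=
  (simil c ti z.1, simil c tj z.2).

(* F is the attractor of {S_1, S_2}: a nonempty compact set with
   F = S_1(F) ∪ S_2(F) (such a set is unique by Hutchinson's theorem). *)
Definition is_attractor {R : realType} (c t1 t2 : R) (F : set R) : Prop :=
  compact F /\ F !=set0 /\ F = simil c t1 @` F `|` simil c t2 @` F.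

Definition is_gamma {R : realType} (c t1 t2 p q r : R)
    (gamma : set (R * R) -> \bar R) : Prop :=
  forall A : set (R * R), measurable A ->
    gamma A =
      (r%:E * gamma (simil2 c t1 t1 @^-1` A)
     + (p - r)%:E * gamma (simil2 c t1 t2 @^-1` A)
     + (q - r)%:E * gamma (simil2 c t2 t1 @^-1` A)
     + (1 - p - q + r)%:E * gamma (simil2 c t2 t2 @^-1` A))%E.

(* Main.v *)
Require Import Defs.
From HB Require Import structures.
From mathcomp Require Import all_boot all_order all_algebra.
From mathcomp Require Import all_classical all_reals all_analysis.
From mathcomp Require Import measurable_realfun.
From mathcomp Require Import ring lra.
From mathcomp Require Import measurable_realfun.
Import Order.TTheory GRing.Theory Num.Theory.
Import numFieldNormedType.Exports.
Local Open Scope classical_set_scope.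
Local Open Scope ring_scope.
Set Implicit Arguments. Unset Strict Implicit. Unset Printing Implicit Defensive.
Definition dF (R : realType) (F : set R) (x : R) : R := inf [set `|x - y| | y in F].

Section dFS.
Variables (R : realType) (F : set R).
Hypothesis F0 : F !=set0.

Lemma dF_lb x : has_lbound [set `|x - y| | y in F].
Proof. by exists 0 => _ [y _ <-]. Qed.

Lemma dF_ne x : [set `|x - y| | y in F] !=set0.
Proof. by case: F0 => y Fy; exists `|x - y|, y. Qed.

Lemma dF_ge0 x : 0 <= dF F x.
Proof. by apply: lb_le_inf; [exact: dF_ne | move=> _ [y _ <-]]. Qed.

Lemma dF_le x y : F y -> dF F x <= `|x - y|.
Proof. by move=> Fy; apply: (ge_inf (dF_lb x)); exists y. Qed.

Lemma dF_lip x x' : dF F x <= `|x - x'| + dF F x'.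
Proof.
rewrite -lerBlDl; apply: lb_le_inf; first exact: dF_ne.
move=> _ [y Fy <-]; rewrite lerBlDl.
apply: (le_trans (dF_le x Fy)).
by rewrite -[x - y](subrKA x') ler_normD.
Qed.

Lemma dF_cont : continuous (dF F).
Proof.
move=> x; apply/cvgrPdist_lt => e e0.
apply/nbhs_ballP; exists e => //= y; rewrite /ball /= => xy.
rewrite (le_lt_trans _ xy)//.
have h1 := dF_lip x y; have h2 := dF_lip y x; rewrite distrC in h2.
by rewrite ler_norml; apply/andP; split; lra.
Qed.

Lemma mdF : measurable_fun setT (dF F).
Proof. exact: continuous_measurable_fun dF_cont. Qed.

Lemma dF_contr (c t : R) : 0 < c -> (forall y, F y -> F (c * y + t)) ->
  forall x, dF F (c * x + t) <= c * dF F x.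
Proof.
move=> c0 sF x; rewrite -ler_pdivrMl//; apply: lb_le_inf; first exact: dF_ne.
move=> _ [y Fy <-]; rewrite ler_pdivrMl//.
apply: (le_trans (dF_le _ (sF _ Fy))).
have -> : c * x + t - (c * y + t) = c * (x - y) by ring.
by rewrite normrM gtr0_norm.
Qed.

Lemma dF0 x : closed F -> dF F x = 0 -> F x.
Proof.
move=> cF dx; apply: cF => B /nbhs_ballP [e /= e0 Be].
have [_ [y Fy <-] ylt] := inf_adherent e0 (conj (dF_ne x) (dF_lb x)).
exists y; split => //; apply: Be; rewrite /ball /=.
by move: ylt; rewrite -/(dF F x) dx add0r.
Qed.
End dFS.
Notation PF := measure_function_pushforward__canonical__measure_function_Measure.

Lemma msimil2 (R : realType) (c a b : R) : measurable_fun setT (simil2 c a b).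
Proof.
apply: measurable_fun_pair; rewrite /simil.
- apply: measurable_funD => //; apply: measurable_funM => //; exact: measurable_fst.
- apply: measurable_funD => //; apply: measurable_funM => //; exact: measurable_snd.
Qed.

Lemma selfsim (R : realType) (gamma : probability (R * R)%type R)
  (c t1 t2 p q r : R) (w1 : 0 <= r) (w2 : 0 <= p - r) (w3 : 0 <= q - r)
  (w4 : 0 <= 1 - p - q + r) :
  is_gamma c t1 t2 p q r gamma ->
  forall h : (R * R)%type -> \bar R, measurable_fun setT h -> (forall z, (0 <= h z)%E) ->
  (\int[gamma]_z h z =
    r%:E * \int[gamma]_z h (simil2 c t1 t1 z)
  + (p - r)%:E * \int[gamma]_z h (simil2 c t1 t2 z)
  + (q - r)%:E * \int[gamma]_z h (simil2 c t2 t1 z)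
  + (1 - p - q + r)%:E * \int[gamma]_z h (simil2 c t2 t2 z))%E.
Proof.
move=> H h mh h0.
rewrite (eq_measure_integral (measure_add
  (measure_add (mscale (NngNum w1) (PF gamma (msimil2 c t1 t1)))
               (mscale (NngNum w2) (PF gamma (msimil2 c t1 t2))))
  (measure_add (mscale (NngNum w3) (PF gamma (msimil2 c t2 t1)))
               (mscale (NngNum w4) (PF gamma (msimil2 c t2 t2)))))); last first.
  move=> A mA _; apply: eq_trans (H A mA) _; rewrite /= /msum !big_ord_recl !big_ord0 /= /msum !big_ord_recl !big_ord0 /=.
  by rewrite /mscale /= /pushforward !adde0 !addeA.
rewrite !ge0_integral_measure_add //; try by move=> *; apply: h0.
rewrite !ge0_integral_mscale //; try by move=> *; apply: h0.
rewrite !ge0_integral_pushforward //; try by move=> *; apply: h0.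
by rewrite !preimage_setT !addeA //; exact: msimil2.
all: exact: msimil2.
Qed.

Section integ.
Variables (R : realType) (gamma : probability (R * R)%type R).
Local Open Scope ereal_scope.

Lemma nullcomp (D : set (R * R)%type) : measurable D -> gamma (~` D) = 0 ->
  forall h : (R * R)%type -> \bar R, measurable_fun setT h -> (forall z, 0 <= h z) ->
  \int[gamma]_z h z = \int[gamma]_(z in D) h z.
Proof.
move=> mD D0 h mh h0.
rewrite -(setUCr D) ge0_integral_setU //; last 3 first.
- exact: measurableC.
- by rewrite setUCr.
- by rewrite disj_set2E setICr.
rewrite [X in _ + X]null_set_integral ?adde0 //; first exact: measurableC.
exact: measurable_funTS.
Qed.

Lemma lin2 (D : set (R * R)%type) : measurable D -> gamma D = 1 ->
  forall (f1 f2 : (R * R)%type -> R), measurable_fun D f1 -> measurable_fun D f2 ->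
  (forall z, D z -> (0 <= f1 z)%R) -> (forall z, D z -> (0 <= f2 z)%R) ->
  forall a b e : R, (0 <= a)%R -> (0 <= b)%R -> (0 <= e)%R ->
  \int[gamma]_(z in D) ((a * f1 z + b * f2 z + e)%R%:E) =
  a%:E * \int[gamma]_(z in D) (f1 z)%:E + b%:E * \int[gamma]_(z in D) (f2 z)%:E + e%:E.
Proof.
move=> mD D1 f1 f2 m1 m2 p1 p2 a b e a0 b0 e0.
under eq_integral do rewrite !EFinD !EFinM.
rewrite ge0_integralD //; last 2 first.
- by move=> z Dz; rewrite adde_ge0 // mule_ge0 // lee_fin ?p1 ?p2.
- apply: emeasurable_funD; apply: emeasurable_funM => //; exact/measurable_EFinP.
rewrite ge0_integralD //; try (by move=> z Dz; rewrite mule_ge0 // lee_fin ?p1 ?p2);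
  try (by apply: emeasurable_funM => //; exact/measurable_EFinP).
rewrite !ge0_integralZl_EFin //; try (by move=> z Dz; rewrite lee_fin ?p1 ?p2);
  try (by exact/measurable_EFinP).
rewrite (integral_cst gamma mD e%:E).
have D1' : (gamma : {measure set (R * R)%type -> \bar R}) D = 1 := D1.
by rewrite D1' mule1.
Qed.

Lemma finI (D : set (R * R)%type) : measurable D -> gamma D = 1 ->
  forall f : (R * R)%type -> R, measurable_fun D f ->
  (forall z, D z -> (0 <= f z)%R) -> forall B : R, (forall z, D z -> (f z <= B)%R) ->
  \int[gamma]_(z in D) (f z)%:E = (fine (\int[gamma]_(z in D) (f z)%:E))%:E.
Proof.
move=> mD D1 f mf f0 B fB; rewrite fineK // ge0_fin_numE; last first.
  by apply: integral_ge0 => z Dz; rewrite lee_fin f0.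
apply: (le_lt_trans (y := B%:E)); last exact: ltry.
have D1' : (gamma : {measure set (R * R)%type -> \bar R}) D = 1 := D1.
rewrite -[X in _ <= X]mule1 -D1' -integral_cst //.
apply: ge0_le_integral => //.
all: try (by move=> z Dz /=; rewrite lee_fin ?f0 ?fB).
all: try exact/measurable_EFinP.
Qed.
End integ.

Definition Q01 (R : realType) : set (R * R)%type := `[0%R, 1%R] `*` `[0%R, 1%R].

Arguments Q01 : clear implicits.

Lemma mQ01 (R : realType) : measurable (Q01 R).
Proof. by apply: measurableX; exact: measurable_itv. Qed.

Lemma Q01P (R : realType) (z : (R * R)%type) : Q01 R z -> [/\ 0 <= z.1, z.1 <= 1, 0 <= z.2 & z.2 <= 1].
Proof. by case; rewrite /= !in_itv /= => /andP[? ?] /andP[? ?]. Qed.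

Lemma Q01C (R : realType) (gamma : probability (R * R)%type R) :
  gamma (Q01 R) = 1%E -> gamma (~` Q01 R) = 0%E.
Proof. by move=> Q1; rewrite probability_setC ?Q1 ?subee //; exact: mQ01. Qed.

Lemma support (R : realType) (gamma : probability (R * R)%type R)
  (c t1 t2 p q r : R) (F : set R) :
  0 < c -> c < 1 -> 0 <= r -> 0 <= p - r -> 0 <= q - r -> 0 <= 1 - p - q + r ->
  is_attractor c t1 t2 F -> gamma (Q01 R) = 1%E -> is_gamma c t1 t2 p q r gamma ->
  gamma (~` (F `*` F)) = 0%E.
Proof.
move=> c0 c1 w1 w2 w3 w4 [cF [F0 FE]] Q1 H.
have s1 y : F y -> F (c * y + t1) by move=> Fy; rewrite FE; left; exists y.
have s2 y : F y -> F (c * y + t2) by move=> Fy; rewrite FE; right; exists y.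
have clF : closed F by apply: compact_closed => //; exact: Rhausdorff.
pose f := fun z : (R * R)%type => dF F z.1 + dF F z.2.
have f0 z : 0 <= f z by rewrite addr_ge0 // dF_ge0.
have mf : measurable_fun setT f.
  apply: measurable_funD; apply: measurableT_comp; try exact: (mdF F0).
  exact: measurable_fst. exact: measurable_snd.
have mh : measurable_fun setT (fun z => (f z)%:E) by exact/measurable_EFinP.
have h0 z : (0 <= (f z)%:E)%E by rewrite lee_fin.
case: (F0) => y0 Fy0.
have fB z : Q01 R z -> f z <= 2 * (1 + `|y0|).
  case/Q01P => a1 a2 b1 b2; rewrite /f.
  have e1 := dF_le z.1 Fy0; have e2 := dF_le z.2 Fy0.
  have n1 := ler_normB z.1 y0; have n2 := ler_normB z.2 y0.
  rewrite (ger0_norm a1) in n1; rewrite (ger0_norm b1) in n2; lra.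
have I1 := nullcomp (@mQ01 R) (Q01C Q1) mh h0.
rewrite (finI (@mQ01 R) Q1 (measurable_funTS mf) (fun z _ => f0 z) fB) in I1.
set x := fine _ in I1.
have x0 : 0 <= x by rewrite /x fine_ge0 // integral_ge0.
have Hc i j (ti tj : R) : (forall y, F y -> F (c * y + ti)) -> (forall y, F y -> F (c * y + tj)) ->
    (\int[gamma]_z (f (simil2 c ti tj z))%:E <= (c * x)%:E)%E.
  move=> si sj.
  apply: (@le_trans _ _ (\int[gamma]_z ((c * f z)%:E))%E).
    apply: ge0_le_integral => //.
    - apply/measurable_EFinP; apply: measurableT_comp => //; exact: msimil2.
    - by apply/measurable_EFinP; apply: measurable_funM.
    - move=> z _; rewrite lee_fin /f /simil2 /simil /= mulrDr.
      by apply: lerD; apply: dF_contr.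
  under eq_integral do rewrite EFinM.
  by rewrite ge0_integralZl_EFin // ?I1 ?EFinM // ?ltW //; exact/measurable_EFinP.
have Hs := selfsim w1 w2 w3 w4 H mh h0.
rewrite I1 in Hs.
have : (x%:E <= r%:E * (c * x)%:E + (p - r)%:E * (c * x)%:E + (q - r)%:E * (c * x)%:E
   + (1 - p - q + r)%:E * (c * x)%:E)%E.
  rewrite [X in (X <= _)%E]Hs.
  by repeat apply: leeD; apply: lee_wpmul2l; rewrite ?lee_fin //; apply: Hc.
rewrite -!EFinM -!EFinD lee_fin => xle.
have xz : x = 0 by nra.
have : (\int[gamma]_(z in setT) `|(f z)%:E| = 0)%E.
  under eq_integral do rewrite gee0_abs ?lee_fin //.
  by rewrite I1 xz.
move/(ae_eq_integral_abs gamma measurableT mh) => -[N [mN N0 sub]].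
apply: (subset_measure0 _ mN _ N0).
  by apply: measurableC; apply: measurableX; exact: closed_measurable.
move=> z /= nK; apply: sub => /= /(_ Logic.I) /eqP; rewrite eqe => /eqP fz.
have d1 := dF_ge0 F0 z.1; have d2 := dF_ge0 F0 z.2.
rewrite /f in fz.
apply: nK; split; apply: (dF0 F0 clF); lra.
Qed.

Unset Implicit Arguments.
Set Strict Implicit.

Theorem theorem2p3 (R : realType) (c t1 t2 p q r : R) (F : set R)
    (gamma : probability (R * R)%type R) :
  0 < c -> c <= 1 / 2 ->
  0 <= t1 -> t1 <= 1 - 2 * c ->
  t1 + c <= t2 -> t2 <= 1 - c ->
  0 < p < 1 -> 0 < q < 1 -> p != q ->
  is_attractor c t1 t2 F ->
  Num.max 0 (p + q - 1) < r -> r < Num.min p q ->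
  gamma (`[0, 1] `*` `[0, 1]) = 1%E ->
  is_gamma c t1 t2 p q r gamma ->
  Num.sqrt (fine (\int[gamma]_(z in F `*` F) ((z.1 - z.2) ^+ 2)%:E)) =
    (t2 - t1) / (1 - c) *
    Num.sqrt ((2 * c * (p - q) ^+ 2 + (1 - c) * (p + q - 2 * r)) / (1 + c)).
Proof.
move=> c0 chalf t10 t1le t2ge t2le /andP[p0 p1] /andP[q0 q1] pq att rlo rhi Q1 H.
move: rlo rhi; rewrite gt_max lt_min => /andP[r0 rlo] /andP[rp rq].
have w1 : 0 <= r by lra.
have w2 : 0 <= p - r by lra.
have w3 : 0 <= q - r by lra.
have w4 : 0 <= 1 - p - q + r by lra.
have c1 : c < 1 by lra.
have Q1' : gamma (Q01 R) = 1%E by [].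
have K0 := support c0 c1 w1 w2 w3 w4 att Q1' H.
have [cF [F0 FE]] := att.
have clF : closed F by apply: compact_closed => //; exact: Rhausdorff.
have mK : measurable (F `*` F) by apply: measurableX; exact: closed_measurable.
have mQ := @mQ01 R.
have QC := Q01C Q1'.
pose G := fun z : (R * R)%type => (z.1 - z.2) ^+ 2.
pose H1 := fun z : (R * R)%type => `|z.1 - z.2 + 1|.
pose H2 := fun z : (R * R)%type => (z.1 - z.2 + 1) ^+ 2.
have mG : measurable_fun setT G.
  apply: measurable_funX; apply: measurable_funB; [exact: measurable_fst|exact: measurable_snd].
have mH2 : measurable_fun setT H2.
  apply: measurable_funX; apply: measurable_funD => //; apply: measurable_funB; [exact: measurable_fst|exact: measurable_snd].
have mH1 : measurable_fun setT H1.
  apply: measurableT_comp => //; apply: measurable_funD => //; apply: measurable_funB; [exact: measurable_fst|exact: measurable_snd].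
have G0 z : 0 <= G z by rewrite /G sqr_ge0.
have H10 z : 0 <= H1 z by rewrite /H1 normr_ge0.
have H20 z : 0 <= H2 z by rewrite /H2 sqr_ge0.
have gQ z : Q01 R z -> 0 <= z.1 - z.2 + 1 by case/Q01P => *; lra.
have GB z : Q01 R z -> G z <= 1.
  by case/Q01P => *; rewrite /G; nra.
have H1B z : Q01 R z -> H1 z <= 2.
  by move=> Qz; rewrite /H1 ger0_norm ?gQ //; case/Q01P: Qz => *; lra.
have H2B z : Q01 R z -> H2 z <= 4.
  by case/Q01P => *; rewrite /H2; nra.
have JG := finI mQ Q1' (measurable_funTS mG) (fun z _ => G0 z) GB.
have J1 := finI mQ Q1' (measurable_funTS mH1) (fun z _ => H10 z) H1B.
have J2 := finI mQ Q1' (measurable_funTS mH2) (fun z _ => H20 z) H2B.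
set v := fine _ in JG.
set a1 := fine _ in J1.
set a2 := fine _ in J2.
have h1m : measurable_fun setT (fun z => (H1 z)%:E) by exact/measurable_EFinP.
have h2m : measurable_fun setT (fun z => (H2 z)%:E) by exact/measurable_EFinP.
have h10 z : (0 <= (fun z => (H1 z)%:E) z)%E by rewrite lee_fin.
have h20 z : (0 <= (fun z => (H2 z)%:E) z)%E by rewrite lee_fin.
have T1 ti tj : 0 <= ti - tj + 1 - c ->
    (\int[gamma]_z (fun z => (H1 z)%:E) (simil2 c ti tj z) = (c * a1 + (ti - tj + 1 - c))%:E)%E.
  move=> e0.
  have mh : measurable_fun setT (fun z => (H1 (simil2 c ti tj z))%:E).
    by apply/measurable_EFinP; apply: measurableT_comp => //; exact: msimil2.
  rewrite (nullcomp mQ QC mh); last by move=> z; rewrite lee_fin.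
  transitivity (\int[gamma]_(z in Q01 R) ((c * H1 z + 0 * H1 z + (ti - tj + 1 - c))%:E))%E.
    apply: eq_integral => z; rewrite inE => Qz; congr EFin.
    rewrite /H1 /simil2 /simil /=.
    have -> : c * z.1 + ti - (c * z.2 + tj) + 1 = c * (z.1 - z.2 + 1) + (ti - tj + 1 - c) by ring.
    rewrite !ger0_norm ?gQ //; first ring.
    by rewrite addr_ge0 // mulr_ge0 ?gQ // ltW.
  rewrite (lin2 mQ Q1') //; try (by move=> z _; apply: H10); try (exact: measurable_funTS); try (exact: ltW).
  by rewrite J1 -!EFinM -!EFinD mul0r addr0.
have T2 ti tj : 0 <= ti - tj + 1 - c ->
    (\int[gamma]_z (fun z => (H2 z)%:E) (simil2 c ti tj z) =
      (c ^+ 2 * a2 + 2 * c * (ti - tj + 1 - c) * a1 + (ti - tj + 1 - c) ^+ 2)%:E)%E.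
  move=> e0.
  have mh : measurable_fun setT (fun z => (H2 (simil2 c ti tj z))%:E).
    by apply/measurable_EFinP; apply: measurableT_comp => //; exact: msimil2.
  rewrite (nullcomp mQ QC mh); last by move=> z; rewrite lee_fin.
  transitivity (\int[gamma]_(z in Q01 R) ((c ^+ 2 * H2 z + (2 * c * (ti - tj + 1 - c)) * H1 z + (ti - tj + 1 - c) ^+ 2)%:E))%E.
    apply: eq_integral => z; rewrite inE => Qz; congr EFin.
    rewrite /H1 /H2 /simil2 /simil /= ger0_norm ?gQ //; ring.
  rewrite (lin2 mQ Q1') //; try (by move=> z _; apply: H10); try (by move=> z _; apply: H20);
    try (exact: measurable_funTS); try (by rewrite sqr_ge0); try (by rewrite !mulr_ge0 // ltW).
  by rewrite J1 J2 -!EFinM -!EFinD.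
have E1 := selfsim w1 w2 w3 w4 H h1m h10.
rewrite (nullcomp mQ QC h1m h10) J1 !T1 in E1; try lra.
have E2 := selfsim w1 w2 w3 w4 H h2m h20.
rewrite (nullcomp mQ QC h2m h20) J2 !T2 in E2; try lra.
rewrite -!EFinM -!EFinD in E1 E2.
case: E1 => E1; case: E2 => E2.
have E3 : v + 2 * a1 = a2 + 1.
  have : (\int[gamma]_(z in Q01 R) ((1 * G z + 2 * H1 z + 0)%:E) =
          \int[gamma]_(z in Q01 R) ((1 * H2 z + 0 * H1 z + 1)%:E))%E.
    apply: eq_integral => z; rewrite inE => Qz; congr EFin.
    rewrite /G /H1 /H2 ger0_norm ?gQ //; ring.
  rewrite !(lin2 mQ Q1') //; try (by move=> z _; apply: H10); try (by move=> z _; apply: H20);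
    try (by move=> z _; apply: G0); try (exact: measurable_funTS).
  rewrite JG J1 J2 -!EFinM -!EFinD; case; lra.
have gm : measurable_fun setT (fun z => (G z)%:E) by exact/measurable_EFinP.
have g0 z : (0 <= (fun z => (G z)%:E) z)%E by rewrite lee_fin.
have -> : (\int[gamma]_(z in F `*` F) ((z.1 - z.2) ^+ 2)%:E = v%:E)%E.
  by rewrite -(nullcomp mK K0 gm g0) (nullcomp mQ QC gm g0) JG.
rewrite /=.
set W := r * (t1 - t1 + 1 - c) + (p - r) * (t1 - t2 + 1 - c) + (q - r) * (t2 - t1 + 1 - c)
  + (1 - p - q + r) * (t2 - t2 + 1 - c).
set V2 := r * (t1 - t1 + 1 - c) ^+ 2 + (p - r) * (t1 - t2 + 1 - c) ^+ 2
  + (q - r) * (t2 - t1 + 1 - c) ^+ 2 + (1 - p - q + r) * (t2 - t2 + 1 - c) ^+ 2.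
have e1 : (1 - c) * a1 = W.
  have -> : (1 - c) * a1 = a1 - c * a1 * (r + (p - r) + (q - r) + (1 - p - q + r)) by ring.
  rewrite {1}E1 /W; ring.
have e2 : (1 - c ^+ 2) * a2 = 2 * c * a1 * W + V2.
  have -> : (1 - c ^+ 2) * a2 = a2 - c ^+ 2 * a2 * (r + (p - r) + (q - r) + (1 - p - q + r)) by ring.
  rewrite {1}E2 /W /V2; ring.
have c1ne : 1 - c != 0 by rewrite gt_eqF // subr_gt0.
have cpne : 1 + c != 0 by rewrite gt_eqF // ltr_wpDr // ltW.
have ccne : 1 - c ^+ 2 != 0 by rewrite gt_eqF // subr_gt0 expr2; nra.
have ha1 : a1 = W / (1 - c) by rewrite -e1 [(1 - c) * a1]mulrC mulfK.
have ha2 : a2 = (2 * c * a1 * W + V2) / (1 - c ^+ 2) by rewrite -e2 [(1 - c ^+ 2) * a2]mulrC mulfK.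
have hv : v = ((t2 - t1) / (1 - c)) ^+ 2 *
    ((2 * c * (p - q) ^+ 2 + (1 - c) * (p + q - 2 * r)) / (1 + c)).
  have -> : v = a2 + 1 - 2 * a1 by lra.
  rewrite ha2 ha1 /W /V2; field.
  by rewrite cpne c1ne.
rewrite hv sqrtrM ?sqr_ge0 // sqrtr_sqr ger0_norm //.
by rewrite divr_ge0 // ?subr_ge0; lra.
Qed.
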